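(* As formal power series, \[ B^{(\mathrm{pk},\mathrm{des})}\Big(xt,\,y,\,\tfrac1t\Big)\,B^{(\mathrm{pk},\mathrm{des})}(x,y,t)=(1+t)\,P^{(\mathrm{pk},\mathrm{des})}(x,y,t)-t. \]
   Context: For a permutation $\pi=\pi_1\cdots\pi_n$ of $[n]$, $\operatorname{des}(\pi)$ is the number of $1\le i\le n-1$ with $\pi_i>\pi_{i+1}$, $\operatorname{asc}(\pi)$ the number with $\pi_i<\pi_{i+1}$, and $\operatorname{pk}(\pi)$ the number of $2\le i\le n-1$ with $\pi_{i-1}<\pi_i>\pi_{i+1}$. A ballot permutation is one with $\operatorname{asc}(\pi_1\cdots\pi_i)\ge\operatorname{des}(\pi_1\cdots\pi_i)$ for all $i$; $\mathscr B_n$ is the set of ballot permutations of $[n]$, $\mathscr B_0=\mathcal S_0=\{\epsilon\}$ (empty permutation, with all statistics $0$). Define $P^{(\mathrm{pk},\mathrm{des})}(x,y,t)=\sum_{n\ge0}\sum_{\pi\in\mathcal S_n} y^{\operatorname{pk}(\pi)}t^{\operatorname{des}(\pi)}\frac{x^n}{n!}$ and $B^{(\mathrm{pk},\mathrm{des})}(x,y,t)=\sum_{n\ge0}\sum_{\pi\in\mathscr B_n} y^{\operatorname{pk}(\pi)}t^{\operatorname{des}(\pi)}\frac{x^n}{n!}$. *)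

(* Defs.v *)
From HB Require Import structures.
From mathcomp Require Import all_boot all_order all_algebra all_fingroup.
From mathcomp Require Import mpoly.
Set Implicit Arguments. Unset Strict Implicit. Unset Printing Implicit Defensive.
Import GRing.Theory.

(* Permutations of [n] are modelled by 'S_n = {perm 'I_n}; the one-line word of
   p is p(0) p(1) ... p(n-1) (values in {0..n-1}, order-isomorphic to [n]). *)
Definition word n (p : 'S_n) : seq nat := [seq val (p i) | i <- enum 'I_n].

Definition desw (s : seq nat) : nat :=
  count (fun i => nth 0 s i.+1 < nth 0 s i)%N (iota 0 (size s).-1).
Definition ascw (s : seq nat) : nat :=
  count (fun i => nth 0 s i < nth 0 s i.+1)%N (iota 0 (size s).-1).
Definition pkw (s : seq nat) : nat :=
  count (fun i => (nth 0 s i < nth 0 s i.+1) && (nth 0 s i.+2 < nth 0 s i.+1))%N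
        (iota 0 (size s - 2)).

Definition ballot (s : seq nat) : bool :=
  all (fun i => desw (take i s) <= ascw (take i s))%N (iota 0 (size s).+1).

Local Open Scope ring_scope.

Notation PR := {mpoly rat[2]}.
Definition yv : PR := 'X_(@ord0 1).
Definition tv : PR := 'X_(@ord_max 1).

(* coefficient of x^n/n! in P^{(pk,des)}(x,y,t) *)
Definition Pcoef (n : nat) : PR :=
  \sum_(p : 'S_n) yv ^+ pkw (word p) * tv ^+ desw (word p).
(* coefficient of x^n/n! in B^{(pk,des)}(x,y,t) *)
Definition Bcoef (n : nat) : PR :=
  \sum_(p : 'S_n | ballot (word p)) yv ^+ pkw (word p) * tv ^+ desw (word p).
(* coefficient of x^n/n! in B^{(pk,des)}(xt,y,1/t):
   y^pk t^(-des) (xt)^n = y^pk t^(n - des) x^n, and des <= n so the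
   (natural-number) exponent n - des is exact. *)
Definition Bcoef_sub (n : nat) : PR :=
  \sum_(p : 'S_n | ballot (word p)) yv ^+ pkw (word p) * tv ^+ (n - desw (word p)).

(* ordinary coefficient of x^n, i.e. divided by n! *)
Definition ogf_coef (F : nat -> PR) (n : nat) : PR := ((n`!)%:R^-1 : rat) *: F n.

(* Main.v *)
Require Import Defs.
From HB Require Import structures.
From mathcomp Require Import all_boot all_order all_algebra all_fingroup.
From mathcomp Require Import mpoly.
From mathcomp Require Import zify ring.
Import GRing.Theory Num.Theory.

Module PartA.
Set Implicit Arguments. Unset Strict Implicit. Unset Printing Implicit Defensive.
Import GRing.Theory Num.Theory.

Fixpoint pkB (x : seq bool) : nat :=
  if x is a :: x' then (a && ~~ head a x') + pkB x' else 0.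

Lemma pkB_cat a b c :
  pkB (a ++ b :: c) = pkB a + pkB c + (last b a && ~~ b) + (b && ~~ head b c).
Proof.
elim: a => [|a0 a IH] /=; first by case: b => /=; lia.
rewrite IH; case: a {IH} => [|a1 a] /=; first by case: a0; case: b => /=; lia.
lia.
Qed.

Definition balB (x : seq bool) :=
  all (fun m => count negb (take m x) <= count id (take m x)) (iota 0 (size x).+1).
Definition cobB (x : seq bool) :=
  all (fun m => count id (drop m x) <= count negb (drop m x)) (iota 0 (size x).+1).

Definition hB (x : seq bool) (m : nat) : int :=
  (count id (take m x))%:Z - (count negb (take m x))%:Z.

Lemma allP_iota (P : pred nat) a n :
  reflect (forall m, a <= m < a + n -> P m) (all P (iota a n)).
Proof.
apply: (iffP allP) => H m; last by rewrite mem_iota => /H.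
by move=> Hm; apply: H; rewrite mem_iota.
Qed.

Lemma count_take_add (P : pred bool) x j m :
  count P (take (j + m) x) = count P (take j x) + count P (take m (drop j x)).
Proof. by rewrite takeD count_cat. Qed.

Lemma balB_drop x j : j <= size x ->
  balB (drop j x) <-> (forall m, j <= m <= size x -> (hB x j <= hB x m)%R).
Proof.
move=> jx; rewrite /balB size_drop; split.
- move/allP_iota => H m /andP[jm mx].
  have [k Ek] : exists k, m = j + k by exists (m - j); lia.
  subst m; have := H k ltac:(lia).
  rewrite /hB !count_take_add; lia.
- move=> H; apply/allP_iota => m; rewrite add0n ltnS => /andP[_ mx].
  have := H (j + m); rewrite leq_addr /= => /(_ ltac:(lia)).
  rewrite /hB !count_take_add; lia.
Qed.

Lemma count_drop_take (P : pred bool) x i m : m <= i ->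
  count P (drop m (take i x)) = count P (take i x) - count P (take m x).
Proof.
move=> mi; rewrite -{2}(cat_take_drop m (take i x)) count_cat take_takel //.
lia.
Qed.

Lemma cobB_take x i : i <= size x ->
  cobB (take i x) <-> (forall m, m <= i -> (hB x i <= hB x m)%R).
Proof.
move=> ix; rewrite /cobB size_take_min (minn_idPl ix); split.
- move/allP_iota => H m mi; have := H m; rewrite add0n ltnS mi => /(_ isT).
  rewrite !count_drop_take // /hB.
  have := count_take_add id x m (i - m); have := count_take_add negb x m (i - m).
  rewrite subnKC //; lia.
- move=> H; apply/allP_iota => m; rewrite add0n ltnS => mi.
  have := H m mi; rewrite !count_drop_take // /hB.
  have := count_take_add id x m (i - m); have := count_take_add negb x m (i - m).
  rewrite subnKC //; lia.
Qed.

Lemma hB_step x m : m < size x ->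
  hB x m.+1 = (hB x m + (if nth false x m then 1 else -1))%R.
Proof.
move=> mx; rewrite /hB (take_nth false mx) -cats1 !count_cat /=.
case: (nth false x m) => /=; lia.
Qed.

Lemma hB0 x : hB x 0 = 0%R.
Proof. by rewrite /hB take0. Qed.

Definition allle x p := all (fun m => hB x p <= hB x m)%R (iota 0 (size x).+1).
Definition FM x p := (p <= size x) && allle x p && all (fun m => hB x p < hB x m)%R (iota 0 p).
Definition LM x q := (q <= size x) && allle x q &&
   all (fun m => hB x q < hB x m)%R (iota q.+1 (size x - q)).

End PartA.
Import PartA.

Module PartB.
Set Implicit Arguments. Unset Strict Implicit. Unset Printing Implicit Defensive.
Import GRing.Theory Num.Theory.

Lemma term_FM x i : i < size x ->
  (cobB (take i x) && balB (drop i.+1 x) && ~~ nth false x i) = FM x i.+1.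
Proof.
move=> ix; have st := hB_step ix.
apply/idP/idP.
- move=> /andP[/andP[/(cobB_take (ltnW ix)) Hc /(balB_drop ix) Hb] nb].
  rewrite (negbTE nb) in st.
  rewrite /FM /allle ix; apply/andP; split; apply/allP_iota => m.
  + rewrite add0n ltnS => mN; case: (leqP m i) => mi.
    * have := Hc m mi; lia.
    * apply: Hb; lia.
  + rewrite add0n ltnS => mi; have := Hc m mi; lia.
- move=> /andP[/andP[_ /allP_iota Hall] /allP_iota Hstr].
  have hi : (hB x i.+1 < hB x i)%R by apply: Hstr; lia.
  have nb : ~~ nth false x i by move: st hi; case: (nth false x i) => //; lia.
  rewrite nb andbT; rewrite (negbTE nb) in st; apply/andP; split.
  + apply/(cobB_take (ltnW ix)) => m mi; have := Hstr m ltac:(lia); lia.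
  + apply/(balB_drop ix) => m /andP[im mN]; apply: Hall; lia.
Qed.

Lemma term_LM x i : i < size x ->
  (cobB (take i x) && balB (drop i.+1 x) && nth false x i) = LM x i.
Proof.
move=> ix; have st := hB_step ix.
apply/idP/idP.
- move=> /andP[/andP[/(cobB_take (ltnW ix)) Hc /(balB_drop ix) Hb] nb].
  rewrite nb in st.
  rewrite /LM /allle (ltnW ix); apply/andP; split; apply/allP_iota => m.
  + rewrite add0n ltnS => mN; case: (leqP m i) => mi.
    * exact: Hc.
    * have := Hb m ltac:(lia); lia.
  + move=> /andP[im mN]; have := Hb m ltac:(lia); lia.
- move=> /andP[/andP[_ /allP_iota Hall] /allP_iota Hstr].
  have hi : (hB x i < hB x i.+1)%R by apply: Hstr; lia.
  have nb : nth false x i by move: st hi; case: (nth false x i) => //; lia.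
  rewrite nb andbT; rewrite nb in st; apply/andP; split.
  + apply/(cobB_take (ltnW ix)) => m mi; apply: Hall; lia.
  + apply/(balB_drop ix) => m /andP[im mN].
    have := Hstr m ltac:(lia); lia.
Qed.

Lemma bal_FM0 x : balB x = FM x 0.
Proof.
rewrite /FM /allle leq0n [X in _ && X]/= andbT; apply/idP/idP.
- rewrite -{1}[x]drop0 => /(balB_drop (leq0n _)) H.
  apply/allP_iota => m; rewrite add0n ltnS => mN; exact: H.
- move=> /allP_iota H; rewrite -[x]drop0; apply/(balB_drop (leq0n (size x))).
  move=> m /andP[_ mN]; apply: H; lia.
Qed.

Lemma cob_LM x : cobB x = LM x (size x).
Proof.
rewrite /LM /allle leqnn subnn [X in _ && X]/= andbT; apply/idP/idP.
- rewrite -{1}[x]take_size => /(cobB_take (leqnn _)) H.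
  apply/allP_iota => m; rewrite add0n ltnS => mN; exact: H.
- move=> /allP_iota H; rewrite -[x]take_size; apply/(cobB_take (leqnn _)).
  move=> m mN; apply: H; lia.
Qed.

Lemma FM_uniq x p q : FM x p -> FM x q -> p = q.
Proof.
wlog pq : p q / p <= q.
  move=> W Hp Hq; case: (leqP p q) => [le|lt]; first exact: W.
  by apply/esym/W => //; apply: ltnW.
move=> /andP[/andP[pN /allP_iota Hp] _] /andP[/andP[qN _] /allP_iota Hq].
case: (ltngtP p q) pq => // lt _.
have := Hp q ltac:(lia); have := Hq p ltac:(lia); lia.
Qed.

Lemma LM_uniq x p q : LM x p -> LM x q -> p = q.
Proof.
wlog pq : p q / p <= q.
  move=> W Hp Hq; case: (leqP p q) => [le|lt]; first exact: W.
  by apply/esym/W => //; apply: ltnW.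
move=> /andP[/andP[pN _] /allP_iota Hp] /andP[/andP[qN /allP_iota Hq] _].
case: (ltngtP p q) pq => // lt _.
have := Hp q ltac:(lia); have := Hq p ltac:(lia); lia.
Qed.

Lemma exists_min (f : nat -> int) N :
  exists2 p, p <= N & forall m, m <= N -> (f p <= f m)%R.
Proof.
elim: N => [|N [p pN Hp]]; first by exists 0 => // m; rewrite leqn0 => /eqP->.
case: (lerP (f p) (f N.+1)) => H.
- exists p; first lia.
  move=> m; rewrite leq_eqVlt => /orP[/eqP->//|]; rewrite ltnS; exact: Hp.
- exists N.+1 => // m; rewrite leq_eqVlt => /orP[/eqP->//|]; rewrite ltnS.
  move=> /Hp; lia.
Qed.

Lemma FM_exists x : exists p, FM x p.
Proof.
pose Q p := (p <= size x) && allle x p.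
have exQ : exists p, Q p.
  have [p pN Hp] := exists_min (hB x) (size x); exists p.
  rewrite /Q pN /=; apply/allP_iota => m; rewrite add0n ltnS; exact: Hp.
case: (ex_minnP exQ) => p /andP[pN /allP_iota Hp] Hmin.
exists p; rewrite /FM pN /=; apply/andP; split; first by apply/allP_iota.
apply/allP_iota => m; rewrite add0n => mp.
case: (lerP (hB x m) (hB x p)) => // Hle.
have : Q m.
  rewrite /Q; apply/andP; split; first lia.
  apply/allP_iota => k kN; have := Hp k kN; lia.
move/Hmin; lia.
Qed.

Lemma LM_exists x : exists p, LM x p.
Proof.
pose Q p := (p <= size x) && allle x p.
have exQ : exists p, Q p.
  have [p pN Hp] := exists_min (hB x) (size x); exists p.
  rewrite /Q pN /=; apply/allP_iota => m; rewrite add0n ltnS; exact: Hp.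
have ubQ : forall i, Q i -> i <= size x by move=> i /andP[].
case: (ex_maxnP exQ ubQ) => p /andP[pN /allP_iota Hp] Hmax.
exists p; rewrite /LM pN /=; apply/andP; split; first by apply/allP_iota.
apply/allP_iota => m /andP[pm mN].
case: (lerP (hB x m) (hB x p)) => // Hle.
have : Q m.
  rewrite /Q; apply/andP; split; first lia.
  apply/allP_iota => k kN; have := Hp k kN; lia.
move/Hmax; lia.
Qed.

End PartB.
Import PartB.

Module PartC.
Set Implicit Arguments. Unset Strict Implicit. Unset Printing Implicit Defensive.
Import GRing.Theory Num.Theory.
Local Open Scope ring_scope.

Lemma cob_last a b : cobB a -> (last b a && ~~ b) = false.
Proof.
case/lastP: a => [|a l] /=; first by case: b.
move=> /allP /(_ (size a)); rewrite mem_iota size_rcons add0n ltnS leqnSn => /(_ isT).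
rewrite -cats1 drop_size_cat // last_cat /=.
by case: l.
Qed.

Lemma bal_head b c : balB c -> (b && ~~ head b c) = false.
Proof.
case: c => [|h c] /=; first by case: b.
move=> /allP /(_ 1%N); rewrite mem_iota /= take0 => /(_ isT).
by case: h; case: b.
Qed.

Section Core.
Variables (R : comRingType) (y t : R).

Definition Wb x := y ^+ pkB x * t ^+ count negb x.
Definition Phi1 z := if cobB z then y ^+ pkB z * t ^+ (count negb z).+1 else 0.
Definition Phi2 z := if balB z then y ^+ pkB z * t ^+ count negb z else 0.

Lemma sum_unique (P : pred nat) K p0 :
  (forall p q, P p -> P q -> p = q) -> P p0 -> (p0 < K)%N ->
  \sum_(i < K) (P i)%:R = 1 :> R.
Proof.
move=> U Pp0 lt; rewrite (bigD1 (Ordinal lt)) //= Pp0 big1 ?addr0 //.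
move=> i /eqP ne; case Pi: (P i) => //; exfalso; apply: ne; apply: val_inj => /=.
exact: U.
Qed.

Lemma term_eq x i : (i < (size x).+1)%N ->
  Phi1 (take i x) * Phi2 (drop i.+1 x) =
  (FM x i.+1)%:R * Wb x + (LM x i)%:R * (t * Wb x).
Proof.
rewrite ltnS leq_eqVlt => /orP[/eqP->|ix].
  rewrite take_size drop_oversize // /Phi2 /= mulr1 -cob_LM.
  have -> : FM x (size x).+1 = false by rewrite /FM ltnn.
  rewrite mul0r add0r /Phi1 /Wb; case: (cobB x); rewrite ?mul1r ?mul0r //.
  by rewrite exprS; ring.
rewrite -term_FM // -term_LM //.
have Ex : x = take i x ++ nth false x i :: drop i.+1 x by rewrite -drop_nth // cat_take_drop.
rewrite /Wb /Phi1 /Phi2.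
case Ca: (cobB (take i x)); case Cb: (balB (drop i.+1 x)) => /=;
  rewrite ?mul0r ?mulr0 ?add0r //.
have Hpk : pkB x = (pkB (take i x) + pkB (drop i.+1 x))%N.
  by rewrite {1}Ex pkB_cat (cob_last _ Ca) (bal_head _ Cb) !addn0.
have Hc : count negb x = (count negb (take i x) + ~~ nth false x i + count negb (drop i.+1 x))%N.
  by rewrite {1}Ex count_cat /= addnA.
rewrite Hpk Hc.
case: (nth false x i) => /=; rewrite ?mul1r ?mul0r ?add0r ?addr0 ?add0n ?addn0;
  rewrite !exprD ?exprS; ring.
Qed.

Lemma core x :
  Phi2 x + \sum_(i < (size x).+1) Phi1 (take i x) * Phi2 (drop i.+1 x) =
  (1 + t) * Wb x.
Proof.
rewrite (eq_bigr _ (fun (i : 'I_(size x).+1) _ => term_eq (ltn_ord i))).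
rewrite big_split /= -!mulr_suml.
have -> : Phi2 x = (FM x 0)%:R * Wb x.
  by rewrite /Phi2 bal_FM0 /Wb; case: (FM x 0); rewrite ?mul1r ?mul0r.
rewrite addrA -mulrDl.
have -> : (FM x 0)%:R + \sum_(i < (size x).+1) (FM x i.+1)%:R =
          \sum_(i < (size x).+2) (FM x i)%:R :> R.
  by rewrite [RHS]big_ord_recl.
have [p Hp] := FM_exists x; have [q Hq] := LM_exists x.
rewrite (sum_unique (@FM_uniq x) Hp); last by move: Hp => /andP[/andP[]]; lia.
rewrite (sum_unique (@LM_uniq x) Hq); last by move: Hq => /andP[/andP[]]; lia.
ring.
Qed.

End Core.

End PartC.
Import PartC.

Module PartD.
Set Implicit Arguments. Unset Strict Implicit. Unset Printing Implicit Defensive.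
Import GRing.Theory Num.Theory.

Lemma eq_count_iota (P Q : pred nat) a n :
  (forall i : nat, (a <= i < a + n)%N -> P i = Q i) -> count P (iota a n) = count Q (iota a n).
Proof. by move=> H; apply: eq_in_count => i; rewrite mem_iota; apply: H. Qed.

Lemma eq_map_iota (T : Type) (P Q : nat -> T) a n :
  (forall i : nat, (a <= i < a + n)%N -> P i = Q i) -> map P (iota a n) = map Q (iota a n).
Proof. by move=> H; apply/eq_in_map => i; rewrite mem_iota; apply: H. Qed.

Definition steps (s : seq nat) : seq bool :=
  [seq (nth 0 s i < nth 0 s i.+1)%N | i <- iota 0 (size s).-1].

Lemma size_steps (s : seq nat) : size (steps s) = (size s).-1.
Proof. by rewrite size_map size_iota. Qed.

Lemma nth_steps (s : seq nat) i : (i < (size s).-1)%N ->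
  nth false (steps s) i = (nth 0 s i < nth 0 s i.+1)%N.
Proof. by move=> H; rewrite (nth_map 0) ?size_iota // nth_iota. Qed.

Lemma uniq_adj (s : seq nat) i : uniq s -> (i < (size s).-1)%N -> nth 0 s i != nth 0 s i.+1.
Proof.
move=> Us H; have i1 : (i < size s)%N by lia.
have i2 : (i.+1 < size s)%N by lia.
by rewrite nth_uniq // ltn_eqF.
Qed.

Lemma desw_steps (s : seq nat) : uniq s -> desw s = count negb (steps s).
Proof.
move=> Us; rewrite /desw count_map; apply: eq_count_iota => i /= H.
rewrite add0n in H; have := @uniq_adj s i Us H; by case: ltngtP.
Qed.

Lemma ascw_steps (s : seq nat) : ascw s = count id (steps s).
Proof. by rewrite /ascw count_map. Qed.

Lemma pkB_cons a x : pkB (a :: x) = ((a && ~~ head a x) + pkB x)%N.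
Proof. by []. Qed.

Lemma pkB_nth x : pkB x = count (fun i => nth false x i && ~~ nth false x i.+1) (iota 0 (size x).-1).
Proof.
elim: x => [|a x IH] //; case: x IH => [|b x] IH; first by case: a.
rewrite pkB_cons IH /= -[in RHS](addn0 1%N) iotaDl count_map /=; congr (_ + _)%N.
Qed.

Lemma pkw_steps (s : seq nat) : uniq s -> pkw s = pkB (steps s).
Proof.
move=> Us; rewrite pkB_nth /pkw size_steps.
have -> : ((size s).-1.-1 = size s - 2)%N by lia.
apply: eq_count_iota => i /= H.
rewrite !nth_steps; try lia.
have Hi : (i.+1 < (size s).-1)%N by lia.
have := @uniq_adj s i.+1 Us Hi; by case: (ltngtP (nth 0 s i.+1) (nth 0 s i.+2)) => //=; rewrite ?andbT ?andbF.
Qed.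

Lemma steps_take (s : seq nat) k : steps (take k s) = take k.-1 (steps s).
Proof.
rewrite /steps -map_take take_iota size_take_min.
have -> : ((minn k (size s)).-1 = minn k.-1 (size s).-1)%N by lia.
apply: eq_map_iota => i /= H.
rewrite !nth_take //; lia.
Qed.

Lemma steps_drop (s : seq nat) k : steps (drop k s) = drop k (steps s).
Proof.
rewrite /steps -map_drop drop_iota size_drop add0n.
have -> : ((size s - k).-1 = (size s).-1 - k)%N by lia.
have -> : iota k ((size s).-1 - k) = map (addn k) (iota 0 ((size s).-1 - k)) by rewrite -iotaDl addn0.
rewrite -map_comp; apply: eq_map => i /=.
by rewrite !nth_drop addnS.
Qed.

Lemma ballot_steps (s : seq nat) : uniq s -> ballot s = balB (steps s).
Proof.
move=> Us; rewrite /ballot /balB size_steps; apply/idP/idP.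
- move=> /allP_iota H; apply/allP_iota => m; rewrite add0n ltnS => mN.
  case: m mN => [|m] mN; first by rewrite take0.
  have Hm : (0 <= m.+2 < 0 + (size s).+1)%N by lia.
  have := H m.+2 Hm.
  rewrite desw_steps ?ascw_steps ?steps_take //; exact: take_uniq.
- move=> /allP_iota H; apply/allP_iota => i; rewrite add0n ltnS => iN.
  rewrite desw_steps ?ascw_steps ?steps_take; last exact: take_uniq.
  apply: H; lia.
Qed.

Definition cobW (s : seq nat) :=
  all (fun m => ascw (drop m s) <= desw (drop m s))%N (iota 0 (size s).+1).

Lemma cobW_steps (s : seq nat) : uniq s -> cobW s = cobB (steps s).
Proof.
move=> Us; rewrite /cobW /cobB size_steps; apply/idP/idP.
- move=> /allP_iota H; apply/allP_iota => m; rewrite add0n ltnS => mN.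
  have Hm : (0 <= m < 0 + (size s).+1)%N by lia.
  have := H m Hm.
  rewrite desw_steps ?ascw_steps ?steps_drop //; exact: drop_uniq.
- move=> /allP_iota H; apply/allP_iota => i; rewrite add0n ltnS => iN.
  rewrite desw_steps ?ascw_steps ?steps_drop; last exact: drop_uniq.
  case: (leqP i (size s).-1) => iN'; first by apply: H; lia.
  by rewrite drop_oversize // size_steps; lia.
Qed.

Lemma steps_rev (s : seq nat) : uniq s -> steps (rev s) = rev (map negb (steps s)).
Proof.
move=> Us; apply: (@eq_from_nth _ false); first by rewrite size_rev size_map !size_steps size_rev.
move=> i; rewrite size_steps size_rev => H.
have h1 : (i.+1 < size s)%N by lia.
have h2 : (i < size s)%N by lia.
have h3 : (i < size (map negb (steps s)))%N by rewrite size_map size_steps.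
rewrite nth_steps ?size_rev // (nth_rev _ h1) (nth_rev _ h2) (nth_rev _ h3).
rewrite size_map size_steps (nth_map false) ?size_steps; last lia.
rewrite nth_steps; last lia.
have E1 : ((size s).-1 - i.+1 = size s - i.+2)%N by lia.
have E2 : ((size s - i.+2).+1 = size s - i.+1)%N by lia.
rewrite E1 E2.
have Hi : (size s - i.+2 < (size s).-1)%N by lia.
have := @uniq_adj s (size s - i.+2) Us Hi; rewrite E2; by case: ltngtP.
Qed.

Lemma pkB_rcons x b : pkB (rcons x b) = (pkB x + (last b x && ~~ b))%N.
Proof. by rewrite -cats1 pkB_cat /=; case: b; rewrite /= ?andbF; lia. Qed.

Lemma pkB_rev_neg x : pkB (rev (map negb x)) = pkB x.
Proof.
elim: x => [|a x IH] //=; rewrite rev_cons pkB_rcons IH.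
case: x {IH} => [|b x] /=; first by case: a.
rewrite rev_cons last_rcons; case: a; case: b => /=; lia.
Qed.

Lemma count_rev_neg (x : seq bool) :
  count negb (rev (map negb x)) = count id x /\ count id (rev (map negb x)) = count negb x.
Proof.
rewrite !count_rev !count_map; split; apply: eq_count => b /=; by case: b.
Qed.

Lemma balB_rev_neg x : balB (rev (map negb x)) = cobB x.
Proof.
rewrite /balB /cobB size_rev size_map; apply/idP/idP.
- move=> /allP_iota H; apply/allP_iota => m; rewrite add0n ltnS => mN.
  have Hm : (0 <= size x - m < 0 + (size x).+1)%N by lia.
  have := H (size x - m) Hm.
  rewrite take_rev size_map -map_drop.
  have -> : (size x - (size x - m) = m)%N by lia.
  by have [-> ->] := count_rev_neg (drop m x).
- move=> /allP_iota H; apply/allP_iota => m; rewrite add0n ltnS => mN.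
  rewrite take_rev size_map -map_drop.
  have [-> ->] := count_rev_neg (drop (size x - m) x).
  apply: H; lia.
Qed.

Section Words.
Variables (R : comRingType) (y t : R).
Local Open Scope ring_scope.

Definition Phi1' (s : seq nat) := if s is [::] then 1 else Phi1 y t (steps s).
Definition Phi2' (s : seq nat) := Phi2 y t (steps s).

Definition f1 (s : seq nat) :=
  if ballot s then y ^+ pkw s * t ^+ (size s - desw s)%N else 0.
Definition f2 (s : seq nat) :=
  if ballot s then y ^+ pkw s * t ^+ desw s else 0.

Lemma f2_Phi (s : seq nat) : uniq s -> f2 s = Phi2' s.
Proof. by move=> Us; rewrite /f2 /Phi2' /Phi2 ballot_steps // pkw_steps // desw_steps. Qed.

Lemma f1_rev_Phi (s : seq nat) : uniq s -> f1 (rev s) = Phi1' s.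
Proof.
move=> Us; have Ur : uniq (rev s) by rewrite rev_uniq.
rewrite /f1 /Phi1' ballot_steps // pkw_steps // desw_steps // steps_rev //.
case: s Us Ur => [|a s] Us Ur; first by rewrite /= expr0 mulr1.
rewrite /Phi1 balB_rev_neg pkB_rev_neg; have [-> _] := count_rev_neg (steps (a :: s)).
case: (cobB _) => //; congr (_ * t ^+ _).
have := count_predC id (steps (a :: s)); rewrite size_steps size_rev /=.
rewrite /predC; have -> : count (fun x => ~~ id x) (steps (a :: s)) = count negb (steps (a :: s)) by [].
lia.
Qed.

Lemma Phi1'_ne (z : seq nat) : z != [::] -> Phi1' z = Phi1 y t (steps z).
Proof. by case: z. Qed.

Lemma per_word (s : seq nat) : uniq s ->
  \sum_(k < (size s).+1) Phi1' (take k s) * Phi2' (drop k s) =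
  (1 + t) * (y ^+ pkw s * t ^+ desw s) - (s == [::])%:R * t.
Proof.
move=> Us; case: s Us => [|a s'] Us.
  by rewrite big_ord_recl big_ord0 /= /Phi2' /Phi2 /= /desw /pkw /=; ring.
have nz : a :: s' != [::] by [].
move: nz Us; set s := a :: s' => nz Us; clearbody s.
rewrite (negbTE nz) mul0r subr0 big_ord_recl.
have -> : Phi1' (take (@ord0 (size s)) s) = 1 by rewrite take0.
rewrite drop0 mul1r pkw_steps // desw_steps //.
have Hs : size s = (size (steps s)).+1 by rewrite size_steps; case: (s) nz.
rewrite -(core y t (steps s)) /Wb; congr (_ + _).
have E : forall i : 'I_(size s),
  Phi1' (take (lift ord0 i) s) * Phi2' (drop (lift ord0 i) s) =
  Phi1 y t (take i (steps s)) * Phi2 y t (drop i.+1 (steps s)).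
  move=> i; rewrite lift0 Phi1'_ne; first by rewrite steps_take /Phi2' steps_drop.
  have : (0 < size s)%N by case: (s) nz.
  rewrite -size_eq0 size_take_min -lt0n => H; by rewrite leq_min H.
rewrite (eq_bigr _ (fun i _ => E i)).
rewrite -!(big_mkord xpredT (fun i => Phi1 y t (take i (steps s)) * Phi2 y t (drop i.+1 (steps s)))).
by rewrite Hs.
Qed.

End Words.

End PartD.
Import PartD.

Module PartE.
Set Implicit Arguments. Unset Strict Implicit. Unset Printing Implicit Defensive.
Import GRing.Theory Num.Theory.

Definition Pl n : seq (seq nat) := permutations (iota 0 n).

Lemma mem_Pl n s : (s \in Pl n) = perm_eq s (iota 0 n).
Proof. by rewrite mem_permutations. Qed.

Lemma Pl_uniq n : uniq (Pl n).
Proof. exact: permutations_uniq. Qed.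

Lemma Pl_uniq_elt n s : s \in Pl n -> uniq s.
Proof. by rewrite mem_Pl => /perm_uniq ->; apply: iota_uniq. Qed.

Lemma Pl_size n s : s \in Pl n -> size s = n.
Proof. by rewrite mem_Pl => /perm_size ->; rewrite size_iota. Qed.

Lemma Pl_lt n s x : s \in Pl n -> x \in s -> x < n.
Proof. by rewrite mem_Pl => /perm_mem ->; rewrite mem_iota. Qed.

Lemma nth_word n (p : 'S_n) (i : 'I_n) : nth 0 (word p) i = val (p i).
Proof.
by rewrite /word (nth_map i) ?size_enum_ord ?ltn_ord // nth_ord_enum.
Qed.

Lemma size_word n (p : 'S_n) : size (word p) = n.
Proof. by rewrite size_map size_enum_ord. Qed.

Lemma word_inj n : injective (@word n).
Proof.
move=> p q E; apply/permP => i; apply: val_inj.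
by rewrite -!nth_word E.
Qed.

Lemma word_Pl n (p : 'S_n) : word p \in Pl n.
Proof.
rewrite mem_Pl; apply: uniq_perm; last 2 first.
- exact: iota_uniq.
- move=> x; rewrite mem_iota add0n /=; apply/idP/idP.
  + by case/mapP => i _ ->; apply: ltn_ord.
  + move=> xn; apply/mapP; exists ((p^-1)%g (Ordinal xn)); first by rewrite mem_enum.
    by rewrite permKV.
- rewrite map_inj_uniq ?enum_uniq // => i j /val_inj; exact: perm_inj.
Qed.

Lemma Pl_word n s : s \in Pl n -> exists p : 'S_n, word p = s.
Proof.
move=> sP; have Us := Pl_uniq_elt sP; have Ss := Pl_size sP.
pose f := fun i : 'I_n => (insubd i (nth 0 s i) : 'I_n).
have ltf : forall i : 'I_n, nth 0 s i < n.
  by move=> i; apply: (Pl_lt sP); apply: mem_nth; rewrite Ss.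
have f_inj : injective f.
  move=> i j; rewrite /f => /(congr1 val); rewrite !insubdK; try exact: ltf. move=> E.
  have Hi : val i < size s by rewrite Ss ltn_ord.
  have Hj : val j < size s by rewrite Ss ltn_ord.
  have := nth_uniq 0 Hi Hj Us; rewrite E eqxx => /esym/eqP H; exact: val_inj.
exists (perm f_inj).
rewrite /word (eq_map (g := fun i : 'I_n => nth 0 s i)); last first.
  by move=> i; rewrite permE /f insubdK //; exact: ltf.
have -> : [seq nth 0 s i | i : 'I_n <- enum 'I_n] = map (nth 0 s) (map val (enum 'I_n)).
  by rewrite -map_comp.
by rewrite val_enum_ord -Ss; apply: mkseq_nth.
Qed.

Lemma perm_word_Pl n : perm_eq (map (@word n) (enum 'S_n)) (Pl n).
Proof.
apply: uniq_perm; first by rewrite map_inj_uniq ?enum_uniq //; apply: word_inj.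
  exact: Pl_uniq.
move=> s; apply/idP/idP.
- by case/mapP => p _ ->; apply: word_Pl.
- by case/Pl_word => p <-; apply: map_f; rewrite mem_enum.
Qed.

Section Sums.
Variable R : comRingType.
Local Open Scope ring_scope.

Lemma sum_word n (F : seq nat -> R) :
  \sum_(p : 'S_n) F (word p) = \sum_(s <- Pl n) F s.
Proof.
rewrite -(perm_big _ (perm_word_Pl n)) big_map.
by rewrite big_enum.
Qed.

Lemma sum_rev n (F : seq nat -> R) :
  \sum_(s <- Pl n) F s = \sum_(s <- Pl n) F (rev s).
Proof.
rewrite -(big_map rev xpredT F); apply: perm_big; apply: uniq_perm.
- exact: Pl_uniq.
- by rewrite map_inj_uniq ?Pl_uniq //; apply: (can_inj (@revK _)).
- move=> s; apply/idP/mapP => [sP|[t tP ->]].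
  + by exists (rev s); rewrite ?revK // mem_Pl perm_rev -mem_Pl.
  + by rewrite mem_Pl perm_rev -mem_Pl.
Qed.

End Sums.

End PartE.
Import PartE.

Module PartF.
Set Implicit Arguments. Unset Strict Implicit. Unset Printing Implicit Defensive.
Import GRing.Theory Num.Theory.

Lemma sorted_mono (e : seq nat) i j : sorted ltn e -> i < size e -> j < size e ->
  (nth 0 e i < nth 0 e j) = (i < j).
Proof.
move=> Se Hi Hj; have H := sorted_ltn_nth ltn_trans 0 Se.
case: (ltngtP i j) => [lt|lt|->]; last by rewrite ltnn.
- exact: H.
- by apply/negbTE; rewrite -leqNgt ltnW //; apply: H.
Qed.

Lemma relabel_nth (e g : seq nat) : uniq e -> perm_eq g e ->
  map (nth 0 e) (map (index^~ e) g) = g.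
Proof.
move=> Ue Pg; rewrite -map_comp; apply: map_id_in => x xg /=.
by rewrite nth_index // -(perm_mem Pg).
Qed.

Lemma relabel_perm (e g : seq nat) : uniq e -> perm_eq g e ->
  perm_eq (map (index^~ e) g) (iota 0 (size e)).
Proof.
move=> Ue Pg; apply: (perm_trans (perm_map _ Pg)).
rewrite -[X in perm_eq (map _ X)](mkseq_nth 0 e) /mkseq -map_comp map_id_in // => i.
by rewrite mem_iota /= => Hi; apply: index_uniq.
Qed.

Lemma index_nth_map (e a : seq nat) : uniq e -> perm_eq a (iota 0 (size e)) ->
  map (index^~ e) (map (nth 0 e) a) = a.
Proof.
move=> Ue Pa; rewrite -map_comp map_id_in // => i.
by rewrite (perm_mem Pa) mem_iota /= => Hi; apply: index_uniq.
Qed.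

Lemma map_nth_perm (e a : seq nat) : perm_eq a (iota 0 (size e)) ->
  perm_eq (map (nth 0 e) a) e.
Proof.
move=> Pa; have := perm_map (nth 0 e) Pa.
by rewrite -/(mkseq (nth 0 e) (size e)) mkseq_nth.
Qed.

Definition Inv (R : Type) (F : seq nat -> R) :=
  forall (f : nat -> nat) (s : seq nat),
    {in s &, forall a b, (f a < f b) = (a < b)} -> F (map f s) = F s.

Lemma Inv_nth R (F : seq nat -> R) (e a : seq nat) : Inv F -> sorted ltn e ->
  perm_eq a (iota 0 (size e)) -> F (map (nth 0 e) a) = F a.
Proof.
move=> IF Se Pa; apply: IF => i j; rewrite !(perm_mem Pa) !mem_iota /= => Hi Hj.
exact: sorted_mono.
Qed.

Lemma mem_pairs (T1 T2 : eqType) (s : seq T1) (t : seq T2) x y :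
  ((x, y) \in [seq (a, b) | a <- s, b <- t]) = (x \in s) && (y \in t).
Proof.
apply/allpairsP/andP => [[[a b] /= [ha hb [-> ->]]]|[ha hb]] //.
by exists (x, y).
Qed.

Section Split.
Variable n : nat.

Definition eS (S : {set 'I_n}) : seq nat :=
  [seq i <- iota 0 n | [exists x in S, val x == i]].

Lemma mem_eS S i : (i \in eS S) = (i < n) && [exists x in S, val x == i].
Proof. by rewrite mem_filter mem_iota andbC. Qed.

Lemma mem_eS_ord S (x : 'I_n) : (val x \in eS S) = (x \in S).
Proof.
rewrite mem_eS ltn_ord /=; apply/existsP/idP => [[z /andP[zS /eqP Ez]]|xS].
  by rewrite -(val_inj Ez).
by exists x; rewrite xS eqxx.
Qed.

Lemma eS_uniq S : uniq (eS S).
Proof. by rewrite filter_uniq // iota_uniq. Qed.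

Lemma eS_sorted S : sorted ltn (eS S).
Proof. by apply: sorted_filter; [apply: ltn_trans | apply: iota_ltn_sorted]. Qed.

Lemma size_eS S : size (eS S) = #|S|.
Proof.
rewrite cardE -(size_map val); apply: perm_size; apply: uniq_perm.
- exact: eS_uniq.
- by rewrite map_inj_uniq ?enum_uniq //; apply: val_inj.
move=> i; rewrite mem_eS; apply/idP/idP.
- move=> /andP[_ /existsP[x /andP[xS /eqP <-]]]; apply: map_f; by rewrite mem_enum.
- case/mapP => x; rewrite mem_enum => xS ->; rewrite ltn_ord /=.
  by apply/existsP; exists x; rewrite xS eqxx.
Qed.

Lemma perm_eS_cat S : perm_eq (eS S ++ eS (~: S)) (iota 0 n).
Proof.
apply: uniq_perm; last 2 first.
- exact: iota_uniq.
- move=> i; rewrite mem_cat mem_iota /=; apply/idP/idP.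
  + by case/orP; rewrite mem_eS => /andP[].
  + move=> Hi; have -> : i = val (Ordinal Hi) by [].
    by rewrite !mem_eS_ord inE; case: (_ \in S).
rewrite cat_uniq !eS_uniq andbT /=; apply/hasPn => i.
rewrite mem_eS => /andP[_ /existsP[x /andP[xS /eqP <-]]].
by rewrite /= mem_eS_ord; rewrite inE in xS.
Qed.

Variable R : comRingType.
Local Open Scope ring_scope.

Definition Psi (S : {set 'I_n}) (ab : seq nat * seq nat) :=
  map (nth 0 (eS S)) ab.1 ++ map (nth 0 (eS (~: S))) ab.2.

Lemma split_sum (F G : seq nat -> R) k : (k <= n)%N -> Inv F -> Inv G ->
  \sum_(p <- Pl n) F (take k p) * G (drop k p) =
  ('C(n, k))%:R * ((\sum_(a <- Pl k) F a) * (\sum_(b <- Pl (n - k)) G b)).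
Proof.
move=> kn IF IG.
pose Ss := enum [set X : {set 'I_n} | #|X| == k].
pose AB := [seq (a, b) | a <- Pl k, b <- Pl (n - k)].
pose L := [seq Psi X ab | X <- Ss, ab <- AB].
have szS : forall X, X \in Ss -> size (eS X) = k /\ size (eS (~: X)) = (n - k)%N.
  move=> X; rewrite mem_enum inE => /eqP cS; rewrite !size_eS cS; split => //.
  by have := cardsC X; rewrite card_ord cS; lia.
have memAB : forall ab, ab \in AB -> ab.1 \in Pl k /\ ab.2 \in Pl (n - k).
  by move=> ab /allpairsP[[a b] /= [ha hb ->]].
have PL : perm_eq L (Pl n).
  apply: uniq_perm.
  - apply: allpairs_uniq; first exact: enum_uniq.
      apply: allpairs_uniq; [exact: Pl_uniq | exact: Pl_uniq |].
      by move=> [a b] [c d] _ _ /= E.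
    move=> [X [a b]] [X' [a' b']]; rewrite !mem_pairs.
    move=> /andP[hX /andP[a1 b1]] /andP[hX' /andP[a1' b1']] /= E.
    have [s1 s2] := szS X hX; have [s1' s2'] := szS X' hX'.
    have T := congr1 (take k) E; have D := congr1 (drop k) E.
    rewrite /Psi /= !take_size_cat ?size_map ?(Pl_size a1) ?(Pl_size a1') // in T.
    rewrite /Psi /= !drop_size_cat ?size_map ?(Pl_size a1) ?(Pl_size a1') // in D.
    have pa : perm_eq a (iota 0 (size (eS X))) by rewrite s1 -mem_Pl.
    have pa' : perm_eq a' (iota 0 (size (eS X'))) by rewrite s1' -mem_Pl.
    have PX := map_nth_perm pa; have PX' := map_nth_perm pa'.
    have EX : eS X = eS X'.
      apply: (irr_sorted_eq ltn_trans ltnn (eS_sorted X) (eS_sorted X')) => i.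
      by rewrite -(perm_mem PX) -(perm_mem PX') T.
    have XX : X = X' by apply/setP => x; rewrite -!mem_eS_ord EX.
    subst X'.
    have pb : perm_eq b (iota 0 (size (eS (~: X)))) by rewrite s2 -mem_Pl.
    have pb' : perm_eq b' (iota 0 (size (eS (~: X)))) by rewrite s2 -mem_Pl.
    rewrite -(index_nth_map (eS_uniq X) pa) T (index_nth_map (eS_uniq X) pa').
    by rewrite -(index_nth_map (eS_uniq _) pb) D (index_nth_map (eS_uniq _) pb').
  - exact: Pl_uniq.
  move=> p; apply/idP/idP.
  - case/allpairsP => [[X ab] /= [hX hab ->]].
    have [s1 s2] := szS X hX; have [a1 b1] := memAB _ hab.
    rewrite mem_Pl; apply: (perm_trans _ (perm_eS_cat X)).
    by apply: perm_cat; apply: map_nth_perm; rewrite ?s1 ?s2 -mem_Pl.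
  move=> pP; have Up := Pl_uniq_elt pP; have Sp := Pl_size pP.
  pose X := [set x : 'I_n | val x \in take k p].
  have Up' := Up; rewrite -(cat_take_drop k p) cat_uniq in Up'.
  case/and3P: Up' => _ /hasPn disj _.
  have PT : perm_eq (take k p) (eS X).
    apply: uniq_perm; [exact: take_uniq | exact: eS_uniq |] => i.
    rewrite mem_eS; apply/idP/idP.
    - move=> it; have ip : i \in p by apply: mem_take it.
      have lt := Pl_lt pP ip.
      rewrite lt /=; apply/existsP; exists (Ordinal lt); by rewrite inE it eqxx.
    - move=> /andP[_ /existsP[x /andP[]]]; rewrite inE => xt /eqP <-; exact xt.
  have PD : perm_eq (drop k p) (eS (~: X)).
    apply: uniq_perm; [exact: drop_uniq | exact: eS_uniq |] => i.
    rewrite mem_eS; apply/idP/idP.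
    - move=> id; have ip : i \in p by apply: mem_drop id.
      have lt := Pl_lt pP ip.
      rewrite lt /=; apply/existsP; exists (Ordinal lt); rewrite !inE /= eqxx andbT.
      exact: disj.
    - move=> /andP[lt /existsP[x /andP[]]]; rewrite !inE => xt /eqP ex.
      have pP' : perm_eq p (iota 0 n) by rewrite -mem_Pl.
      have ip : i \in p by rewrite (perm_mem pP') mem_iota.
      by move: ip; rewrite -{1}(cat_take_drop k p) mem_cat -ex (negbTE xt).
  have cX : #|X| = k by rewrite -size_eS -(perm_size PT) size_takel // Sp.
  have hX : X \in Ss by rewrite mem_enum inE cX.
  have [s1 s2] := szS X hX.
  apply/allpairsP; exists (X, (map (index^~ (eS X)) (take k p), map (index^~ (eS (~:X))) (drop k p))); split => //=.
  - rewrite mem_pairs !mem_Pl; apply/andP; split.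
    + by have := relabel_perm (eS_uniq X) PT; rewrite s1.
    + by have := relabel_perm (eS_uniq _) PD; rewrite s2.
  - by rewrite /Psi /= !relabel_nth ?eS_uniq // cat_take_drop.
rewrite -(perm_big _ PL) big_allpairs_dep /=.
rewrite big_seq (eq_bigr (fun _ => (\sum_(a <- Pl k) F a) * (\sum_(b <- Pl (n - k)) G b))); last first.
  move=> X XX; have [s1 s2] := szS X XX.
  rewrite big_seq (eq_bigr (fun ab => F ab.1 * G ab.2)); last first.
    move=> ab abAB; have [h1 h2] := memAB ab abAB.
    rewrite /Psi take_size_cat ?drop_size_cat ?size_map ?(Pl_size h1) //.
    rewrite (Inv_nth IF (eS_sorted X)) ?(Inv_nth IG (eS_sorted _)) //.
      by rewrite -mem_Pl s2.
    by rewrite -mem_Pl s1.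
  rewrite -big_seq big_allpairs big_distrlr /=; done.
rewrite -big_seq big_enum sumr_const card_draws card_ord.
by rewrite mulr_natl.
Qed.

End Split.

End PartF.
Import PartF.

Module PartG.
Set Implicit Arguments. Unset Strict Implicit. Unset Printing Implicit Defensive.
Import GRing.Theory Num.Theory.
Local Open Scope ring_scope.

Lemma steps_map (f : nat -> nat) (s : seq nat) :
  {in s &, forall a b, (f a < f b)%N = (a < b)%N} -> steps (map f s) = steps s.
Proof.
move=> Hf; rewrite /steps size_map; apply: eq_map_iota => i /= Hi.
rewrite !(nth_map 0%N); try lia.
apply: Hf; apply: mem_nth; move: Hi; rewrite add0n; case: (size s) => //= m; lia.
Qed.

Lemma Inv_Phi1' (R : comRingType) (y t : R) : Inv (Phi1' y t).
Proof. by move=> f [|a s] Hf //=; rewrite /Phi1' -(steps_map Hf). Qed.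

Lemma Inv_Phi2' (R : comRingType) (y t : R) : Inv (Phi2' y t).
Proof. by move=> f s Hf; rewrite /Phi2' steps_map. Qed.

Lemma Bsub_eq k : Bcoef_sub k = \sum_(s <- Pl k) Phi1' yv tv s.
Proof.
rewrite /Bcoef_sub big_mkcond /=.
rewrite (eq_bigr (fun p => f1 yv tv (word p))); last first.
  by move=> p _; rewrite /f1 size_word.
rewrite sum_word sum_rev big_seq [RHS]big_seq; apply: eq_bigr => s sP.
by rewrite f1_rev_Phi // (Pl_uniq_elt sP).
Qed.

Lemma B_eq k : Bcoef k = \sum_(s <- Pl k) Phi2' yv tv s.
Proof.
rewrite /Bcoef big_mkcond /=.
rewrite (eq_bigr (fun p => f2 yv tv (word p))); last by move=> p _.
rewrite sum_word big_seq [RHS]big_seq; apply: eq_bigr => s sP.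
by rewrite f2_Phi // (Pl_uniq_elt sP).
Qed.

Lemma P_eq n : Pcoef n = \sum_(s <- Pl n) yv ^+ pkw s * tv ^+ desw s.
Proof. by rewrite /Pcoef (@sum_word _ n (fun s => yv ^+ pkw s * tv ^+ desw s)). Qed.

Lemma sum_nil n : \sum_(s <- Pl n) (s == [::])%:R = (n == 0)%:R :> PR.
Proof.
case: n => [|n]; first by rewrite /Pl /= big_cons big_nil addr0.
rewrite big_seq big1 // => s sP; have := Pl_size sP.
by case: s sP.
Qed.

Lemma main_comb n :
  \sum_(k < n.+1) ('C(n, k))%:R * (Bcoef_sub k * Bcoef (n - k)) =
  (1 + tv) * Pcoef n - (n == 0)%:R * tv.
Proof.
rewrite (eq_bigr (fun k : 'I_n.+1 => \sum_(p <- Pl n) Phi1' yv tv (take k p) * Phi2' yv tv (drop k p)));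
  last first.
  move=> k _; rewrite Bsub_eq B_eq split_sum //; first by rewrite -ltnS.
  - exact: Inv_Phi1'.
  - exact: Inv_Phi2'.
rewrite exchange_big /= big_seq.
rewrite (eq_bigr (fun p => (1 + tv) * (yv ^+ pkw p * tv ^+ desw p) - (p == [::])%:R * tv)); last first.
  move=> p pP; rewrite -(Pl_size pP); exact: per_word (Pl_uniq_elt pP).
rewrite -big_seq sumrB -mulr_sumr -mulr_suml sum_nil P_eq.
done.
Qed.


End PartG.
Import PartG.

Local Open Scope ring_scope.

Theorem theorem3p3 (n : nat) :
  \sum_(k < n.+1) ogf_coef Bcoef_sub k * ogf_coef Bcoef (n - k)
  = (1 + tv) * ogf_coef Pcoef n - (n == 0%N)%:R * tv.
Proof.
have E : forall k : 'I_n.+1, ogf_coef Bcoef_sub k * ogf_coef Bcoef (n - k) =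
   ((n`!)%:R^-1 : rat) *: (('C(n, k))%:R * (Bcoef_sub k * Bcoef (n - k))).
  move=> k; have kn : (k <= n)%N by rewrite -ltnS.
  rewrite /ogf_coef -scalerAl -scalerAr scalerA mulr_natl -scaler_nat scalerA.
  congr (_ *: _).
  have H : (('C(n, k) * (k`! * (n - k)`!))%:R : rat) = (n`!)%:R by rewrite bin_fact.
  rewrite !natrM in H; rewrite -H.
  have h1 : (k`!)%:R != 0 :> rat by rewrite pnatr_eq0 -lt0n fact_gt0.
  have h2 : ((n - k)`!)%:R != 0 :> rat by rewrite pnatr_eq0 -lt0n fact_gt0.
  have h3 : ('C(n, k))%:R != 0 :> rat by rewrite pnatr_eq0 -lt0n bin_gt0.
  field.
  by rewrite h1 h2 h3.
rewrite (eq_bigr _ (fun k _ => E k)) -scaler_sumr main_comb.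
rewrite scalerBr /ogf_coef scalerAr; congr (_ - _).
clear E; case: n => [|n] /=; first by rewrite invr1 !scale1r.
by rewrite mul0r scaler0.
Qed.
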